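(* Let $(K_i)_{i\in\mathbb N}$ be number fields with $K_i\subseteq K_{i+1}$ for all $i$ and $\overline{\mathbb Q}=\bigcup_{i}K_i$. For each $i\in\mathbb N$ and each non-Archimedean place $v$ of $K_i$ let $d_i(v)\in\mathbb Q$, and assume $d_i(v)=\sum_{w\in W_v(K_{i+1}/K_i)}d_{i+1}(w)$ for all $i$ and all non-Archimedean places $v$ of $K_i$. Then there exists a unique consistent map $c:\mathcal J\to\mathbb Q$ such that $c(K_i,v)=d_i(v)$ for all $i\in\mathbb N$ and all non-Archimedean places $v$ of $K_i$.
   Context: $\overline{\mathbb Q}$ is an algebraic closure of $\mathbb Q$. For number fields $K\subseteq L$ and a place $v$ of $K$, $W_v(L/K)$ denotes the set of places of $L$ dividing $v$. $\mathcal J$ is the set of pairs $(K,v)$ with $K\subseteq\overline{\mathbb Q}$ a number field and $v$ a non-Archimedean place of $K$. A map $c:\mathcal J\to\mathbb Q$ is consistent if $c(K,v)=\sum_{w\in W_v(L/K)}c(L,w)$ for all number fields $K$, all finite extensions $L/K$, and all non-Archimedean places $v$ of $K$. *)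

(* Defs.v *)
(* algC (from mathcomp.field.algC) is used as the algebraic
   closure Qbar of Q; sets/finite sums from mathcomp-analysis (classical). *)
From HB Require Import structures.
From mathcomp Require Import all_boot all_order all_algebra.
From mathcomp Require Import algC algnum.
From mathcomp Require Import boolp classical_sets fsbigop.

Set Implicit Arguments.
Unset Strict Implicit.
Unset Printing Implicit Defensive.
Import Order.TTheory GRing.Theory Num.Theory.
Local Open Scope classical_set_scope.
Local Open Scope ring_scope.

Definition finite_dim_over_Q (K : set algC) : Prop :=
  exists s : seq algC, (forall i : 'I_(size s), K s`_i) /\
    forall x, K x -> exists a : 'I_(size s) -> rat,
      x = \sum_(i < size s) ratr (a i) * s`_i.

Definition is_number_field (K : set algC) : Prop :=
  [/\ K 0 /\ K 1,
      (forall x y, K x -> K y -> K (x - y)),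
      (forall x y, K x -> K y -> K (x * y)),
      (forall x, K x -> K x^-1) &
      finite_dim_over_Q K].

Definition ring_of_integers (K : set algC) : set algC :=
  [set x | K x /\ x \in Aint].

(* Non-Archimedean places of a number field K, identified (as usual) with the
   nonzero prime ideals of O_K, represented as subsets of algC. *)
Definition is_nonarch_place (K : set algC) (v : set algC) : Prop :=
  let O := ring_of_integers K in
  [/\ v `<=` O /\ v 0,
      (forall x y, v x -> v y -> v (x - y)) /\
      (forall a x, O a -> v x -> v (a * x)),
      ~ v 1,
      (exists x, v x /\ x != 0) &
      (forall a b, O a -> O b -> v (a * b) -> v a \/ v b)].

(* W_v(L/K): places w of L lying above v, i.e. w ∩ K = v (equivalently
   w ∩ O_K = v, as w ⊆ O_L). *)
Definition places_above (L K v : set algC) : set (set algC) :=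
  [set w | is_nonarch_place L w /\ w `&` K = v].

Definition in_J (K v : set algC) : Prop := is_number_field K /\ is_nonarch_place K v.

(* Consistency of c : J -> Q (c is given as a function on all pairs of sets,
   only its values on J matter). *)
Definition consistent (c : set algC -> set algC -> rat) : Prop :=
  forall K L v, is_number_field K -> is_number_field L -> K `<=` L ->
    is_nonarch_place K v ->
    c K v = \sum_(w \in places_above L K v) c L w.

(* Main.v *)
Require Import Defs.
From HB Require Import structures.
From mathcomp Require Import all_boot all_order all_algebra.
From mathcomp Require Import algC algnum.
From mathcomp Require Import boolp classical_sets fsbigop.
From mathcomp Require Import cardinality ring zify.
Import Order.TTheory GRing.Theory Num.Theory.
Local Open Scope classical_set_scope.
Local Open Scope ring_scope.

Set Implicit Arguments.
Unset Strict Implicit.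

Section NF.
Variable K : set algC.
Hypothesis hK : is_number_field K.

Lemma nf0 : K 0. Proof. by case: hK => -[h _]. Qed.
Lemma nf1 : K 1. Proof. by case: hK => -[_ h]. Qed.
Lemma nfB x y : K x -> K y -> K (x - y). Proof. by case: hK => _ h _ _ _; apply: h. Qed.
Lemma nfM x y : K x -> K y -> K (x * y). Proof. by case: hK => _ _ h _ _; apply: h. Qed.
Lemma nfV x : K x -> K x^-1. Proof. by case: hK => _ _ _ h _; apply: h. Qed.
Lemma nfN x : K x -> K (- x). Proof. by move=> Kx; rewrite -sub0r; apply: nfB => //; apply: nf0. Qed.
Lemma nfD x y : K x -> K y -> K (x + y).
Proof. by move=> Kx Ky; rewrite -[y]opprK; apply: nfB => //; apply: nfN. Qed.
Lemma nf_nat n : K n%:R.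
Proof. elim: n => [|n IH]; first exact: nf0. by rewrite mulrSr; apply: nfD => //; apply: nf1. Qed.
Lemma nf_int (z : int) : K z%:~R.
Proof. case: z => n; first exact: nf_nat. by rewrite NegzE mulrNz; apply: nfN; apply: nf_nat. Qed.
Lemma nf_rat q : K (ratr q).
Proof. by rewrite /ratr; apply: nfM; [apply: nf_int | apply: nfV; apply: nf_int]. Qed.
Lemma nf_sum (I : Type) (r : seq I) (P : pred I) (F : I -> algC) :
  (forall i, P i -> K (F i)) -> K (\sum_(i <- r | P i) F i).
Proof. move=> h; apply: big_ind => //; [exact: nf0 | exact: nfD]. Qed.
Lemma nf_prod (I : Type) (r : seq I) (P : pred I) (F : I -> algC) :
  (forall i, P i -> K (F i)) -> K (\prod_(i <- r | P i) F i).
Proof. move=> h; apply: big_ind => //; [exact: nf1 | exact: nfM]. Qed.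

Lemma O_int (z : int) : ring_of_integers K z%:~R.
Proof. by split; [apply: nf_int | apply: Aint_int]. Qed.
Lemma OB x y : ring_of_integers K x -> ring_of_integers K y -> ring_of_integers K (x - y).
Proof. by move=> [Kx Ax] [Ky Ay]; split; [apply: nfB | apply: rpredB]. Qed.
Lemma OM x y : ring_of_integers K x -> ring_of_integers K y -> ring_of_integers K (x * y).
Proof. by move=> [Kx Ax] [Ky Ay]; split; [apply: nfM | apply: rpredM]. Qed.
Lemma OD x y : ring_of_integers K x -> ring_of_integers K y -> ring_of_integers K (x + y).
Proof. by move=> [Kx Ax] [Ky Ay]; split; [apply: nfD | apply: rpredD]. Qed.
Lemma O1 : ring_of_integers K 1. Proof. by rewrite -[1]/(1%:~R); apply: O_int. Qed.
Lemma O_prod (I : Type) (r : seq I) (P : pred I) (F : I -> algC) :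
  (forall i, P i -> ring_of_integers K (F i)) -> ring_of_integers K (\prod_(i <- r | P i) F i).
Proof. move=> h; apply: big_ind => //; [exact: O1 | exact: OM]. Qed.
Lemma OX x n : ring_of_integers K x -> ring_of_integers K (x ^+ n).
Proof. move=> Ox; elim: n => [|n IH]; [exact: O1 | by rewrite exprS; apply: OM]. Qed.
Lemma O_hornerZ (p : {poly algC}) a : (forall k, p`_k \is a Num.int) ->
  ring_of_integers K a -> ring_of_integers K p.[a].
Proof.
move=> hp Oa; rewrite horner_coef; apply: big_ind => //.
- by rewrite -[0]/(0%:~R); apply: O_int.
- exact: OD.
- move=> i _; apply: OM; last by apply: OX.
  by have /intrP[z ->] := hp i; apply: O_int.
Qed.
End NF.

Section Place.
Variables (K v : set algC).
Hypothesis hv : is_nonarch_place K v.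

Lemma pl_O x : v x -> ring_of_integers K x. Proof. by case: hv => -[h _] _ _ _ _; apply: h. Qed.
Lemma pl0 : v 0. Proof. by case: hv => -[_ h]. Qed.
Lemma plB x y : v x -> v y -> v (x - y). Proof. by case: hv => _ [h _] _ _ _; apply: h. Qed.
Lemma plM a x : ring_of_integers K a -> v x -> v (a * x). Proof. by case: hv => _ [_ h] _ _ _; apply: h. Qed.
Lemma plMr a x : ring_of_integers K a -> v x -> v (x * a). Proof. by rewrite mulrC; apply: plM. Qed.
Lemma pl1 : ~ v 1. Proof. by case: hv => _ _ h _ _. Qed.
Lemma pl_nz : exists x, v x /\ x != 0. Proof. by case: hv => _ _ _ h _. Qed.
Lemma pl_prime a b : ring_of_integers K a -> ring_of_integers K b -> v (a * b) -> v a \/ v b.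
Proof. by case: hv => _ _ _ _ h; apply: h. Qed.
Lemma plN x : v x -> v (- x). Proof. by move=> vx; rewrite -sub0r; apply: plB => //; apply: pl0. Qed.
Lemma plD x y : v x -> v y -> v (x + y).
Proof. by move=> vx vy; rewrite -[y]opprK; apply: plB => //; apply: plN. Qed.
Lemma pl_sum (I : Type) (r : seq I) (P : pred I) (F : I -> algC) :
  (forall i, P i -> v (F i)) -> v (\sum_(i <- r | P i) F i).
Proof. move=> h; apply: big_ind => //; [exact: pl0 | exact: plD]. Qed.
Lemma pl_sub : v `<=` K. Proof. by move=> x /pl_O []. Qed.
End Place.

Lemma Aint_coef x : x \in Aint -> forall k, (minCpoly x)`_k \is a Num.int.
Proof. by rewrite unfold_in => /polyOverP. Qed.

Lemma coef_MXC (p : {poly algC}) c k :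
  (p * 'X + c%:P)`_k = if k is k'.+1 then p`_k' else c.
Proof. by rewrite coefD coefMX coefC; case: k => [|k] /=; rewrite ?add0r ?addr0. Qed.

Lemma intcoef_MXC (p : {poly algC}) c :
  (forall k, (p * 'X + c%:P)`_k \is a Num.int) ->
  c \is a Num.int /\ forall k, p`_k \is a Num.int.
Proof.
move=> h; split; first by have := h 0%N; rewrite coef_MXC.
by move=> k; have := h k.+1; rewrite coef_MXC.
Qed.

Lemma pl_int_nz K v : is_number_field K -> is_nonarch_place K v ->
  exists n : nat, (0 < n)%N /\ v n%:R.
Proof.
move=> hK hv; have [x [vx nx]] := pl_nz hv.
have Ox := pl_O hv vx.
have L : forall p : {poly algC}, (forall k, p`_k \is a Num.int) -> p.[x] = 0 -> p != 0 ->
    exists k, p`_k != 0 /\ v p`_k.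
  elim/poly_ind => [|p c IH] hc; first by rewrite eqxx.
  have [cZ pZ] := intcoef_MXC hc.
  rewrite !hornerE => e nz.
  have [c0|cn0] := eqVneq c 0.
    move: e nz; rewrite c0 addr0 => /eqP; rewrite mulf_eq0 (negPf nx) orbF => /eqP e nz.
    have pn0 : p != 0 by apply: contraNneq nz => ->; rewrite mul0r add0r.
    have [k [h1 h2]] := IH pZ e pn0.
    by exists k.+1; rewrite coef_MXC.
  exists 0%N; rewrite coef_MXC; split => //.
  have -> : c = - (p.[x] * x) by apply/eqP; rewrite -addr_eq0 addrC e.
  by apply: (plN hv); apply: (plM hv) vx; apply: O_hornerZ => //; case: Ox.
have xA : x \in Aint by case: Ox.
have [k [k1 k2]] := L _ (Aint_coef xA) (rootP (root_minCpoly x))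
   (monic_neq0 (minCpoly_monic x)).
move: k1 k2; have /intrP[z ->] := Aint_coef xA k.
case: z => n.
  rewrite pnatr_eq0 => n0 vn; exists n; split => //; by rewrite lt0n.
rewrite NegzE mulrNz => _ vn; exists n.+1; split => //.
by rewrite -[_%:R]opprK; apply: (plN hv).
Qed.

Lemma incomp M K v w w' : is_number_field M -> is_number_field K ->
  places_above M K v w -> places_above M K v w' -> w' `<=` w -> w `<=` w'.
Proof.
move=> hM hK [hw ew] [hw' ew'] sub a wa; apply: contrapT => nwa.
have Oa := pl_O hw wa.
have vw' : v `<=` w' by rewrite -ew' => y [].
have L : forall p : {poly algC}, (forall k, p`_k \is a Num.int) -> w' p.[a] ->
    forall k, v p`_k.
  elim/poly_ind => [|p c IH] hc.
    by move=> _ k; rewrite coef0 -ew; split; [apply: pl0 hw | apply: nf0 hK].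
  have [cZ pZ] := intcoef_MXC hc.
  have Opa : ring_of_integers M p.[a] by apply: O_hornerZ.
  have Kc : K c by have /intrP[z ->] := cZ; apply: nf_int.
  have Oc : ring_of_integers M c by have /intrP[z ->] := cZ; apply: O_int.
  rewrite !hornerE => e.
  have wc : w c.
    have -> : c = (p.[a] * a + c) - p.[a] * a by rewrite addrC addKr.
    by apply: (plB hw); [apply: sub | apply: (plM hw)].
  have vc : v c by rewrite -ew; split.
  have w'pa : w' (p.[a] * a).
    have -> : p.[a] * a = (p.[a] * a + c) - c by rewrite addrK.
    by apply: (plB hw') => //; apply: vw'.
  have [] := pl_prime hw' Opa Oa w'pa => // w'p.
  by move=> [|k]; rewrite coef_MXC //; apply: IH.
have xA : a \in Aint by case: Oa.
have := L _ (Aint_coef xA) _ (size (minCpoly a)).-1.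
rewrite -lead_coefE (monicP (minCpoly_monic a)) (rootP (root_minCpoly a)).
move/(_ (pl0 hw')) => v1; apply: (pl1 hw); by rewrite -ew in v1; case: v1.
Qed.

Lemma pl_gen K v : is_number_field K -> is_nonarch_place K v ->
  exists g : nat, (1 < g)%N /\ forall z : int, v z%:~R -> (g %| `|z|)%N.
Proof.
move=> hK hv; have [n [n0 vn]] := pl_int_nz hK hv.
pose P := fun m : nat => (0 < m)%N && `[< v m%:R >].
have exP : exists m, P m by exists n; rewrite /P n0 /=; apply/asboolP.
case: (ex_minnP exP) => g /andP[g0 /asboolP vg] gmin.
have vnat : forall m : nat, v m%:R -> (g %| m)%N.
  move=> m vm; rewrite /dvdn; apply/eqP; apply: contrapT => /eqP r0.
  have := divn_eq m g; set q := (m %/ g)%N; set r := (m %% g)%N => em.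
  have er : r%:R = m%:R - q%:R * g%:R :> algC.
    by rewrite [in RHS]em natrD natrM; ring.
  have vr : v r%:R.
    rewrite er; apply: (plB hv) => //; apply: (plM hv) => //.
    by rewrite -[q%:R]/(q%:~R : algC); apply: O_int.
  have := gmin r; rewrite /P lt0n r0 /= => /(_ (asboolT vr)).
  by rewrite leqNgt ltn_pmod.
exists g; split.
  rewrite ltn_neqAle g0 andbT; apply/eqP => g1; apply: (pl1 hv).
  by rewrite -[1]/(1%:R) g1.
case=> m vz; apply: vnat => //.
by move: vz; rewrite NegzE mulrNz => /(plN hv); rewrite opprK.
Qed.

Lemma lin_dep (s : seq algC) k (e : 'I_k -> algC) : (size s < k)%N ->
  (forall j, exists a : 'I_(size s) -> rat, e j = \sum_(i < size s) ratr (a i) * s`_i) ->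
  exists a : 'I_k -> int, (exists j, a j != 0) /\ \sum_(j < k) (a j)%:~R * e j = 0.
Proof.
move=> lt /choice[A hA].
pose Am : 'M[rat]_(k, size s) := \matrix_(j, i) A j i.
have kn0 : kermx Am != 0.
  by rewrite kermx_eq0 -row_leq_rank -ltnNge (leq_ltn_trans (rank_leq_col Am)).
have [r rn0] : exists r, row r (kermx Am) != 0.
  apply: contrapT => hn; move/negP: kn0; apply; apply/eqP/row_matrixP => r.
  by rewrite row0; apply/eqP/negPn/negP => h; apply: hn; exists r.
set u := row r (kermx Am) in rn0.
have uA : u *m Am = 0 by rewrite /u -row_mul mulmx_ker row0.
have [j0 uj0] : exists j, u 0 j != 0.
  apply: contrapT => hn; move/negP: rn0; apply; apply/eqP/rowP => j.
  by rewrite [RHS]mxE; apply/eqP/negPn/negP => h; apply: hn; exists j.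
have rel : \sum_(j < k) ratr (u 0 j) * e j = 0.
  under eq_bigr do rewrite hA mulr_sumr.
  rewrite exchange_big /=.
  rewrite (eq_bigr (fun i : 'I_(size s) => ratr ((u *m Am) 0 i) * s`_i)); last first.
    move=> i _; rewrite !mxE rmorph_sum /= mulr_suml; apply: eq_bigr => j _.
    by rewrite /Am mxE rmorphM /= mulrA.
  by rewrite uA; apply: big1 => i _; rewrite mxE rmorph0 mul0r.
pose D := \prod_(l < k) denq (u 0 l).
exists (fun j => numq (u 0 j) * \prod_(l < k | l != j) denq (u 0 l)); split.
  exists j0; rewrite mulf_neq0 ?numq_eq0 //.
  by apply/prodf_neq0 => l _; apply: denq_neq0.
have key : forall j, (numq (u 0 j) * \prod_(l < k | l != j) denq (u 0 l))%:~R
    = ratr (u 0 j) * (D%:~R : algC).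
  move=> j; rewrite -[LHS]ratr_int -[D%:~R]ratr_int -rmorphM /=; congr ratr.
  rewrite /D [in RHS](bigD1 j) //= !intrM numqE -mulrA; congr (_ * _).
under eq_bigr do rewrite key mulrAC.
by rewrite -mulr_suml rel mul0r.
Qed.

Lemma descent K v k (e : 'I_k -> algC) : is_number_field K -> is_nonarch_place K v ->
  (exists a : 'I_k -> int, (exists j, a j != 0) /\ \sum_(j < k) (a j)%:~R * e j = 0) ->
  exists a : 'I_k -> int, (exists j, ~ v (a j)%:~R) /\ \sum_(j < k) (a j)%:~R * e j = 0.
Proof.
move=> hK hv; have [g [g1 hg]] := pl_gen hK hv.
suff H : forall N (a : 'I_k -> int), (\sum_(j < k) `|a j| <= N)%N ->
    (exists j, a j != 0) -> \sum_(j < k) (a j)%:~R * e j = 0 ->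
    exists a : 'I_k -> int, (exists j, ~ v (a j)%:~R) /\ \sum_(j < k) (a j)%:~R * e j = 0.
  by move=> [a [nz rel]]; apply: (H _ a (leqnn _) nz rel).
elim=> [|N IH] a hN [j0 nz] rel.
  move: hN; rewrite (bigD1 j0) //= leqn0 addn_eq0 absz_eq0 => /andP[/eqP h _].
  by move: nz; rewrite h eqxx.
case: (pselect (exists j, ~ v (a j)%:~R)) => [h|h]; first by exists a.
have hall j : v (a j)%:~R by apply: contrapT => nv; apply: h; exists j.
pose b j := ((a j) %/ g%:Z)%Z.
have ab j : a j = b j * g%:Z by rewrite /b divzK //; rewrite /dvdz /=; apply: hg.
have sab : (\sum_(j < k) `|a j| = (\sum_(j < k) `|b j|) * g)%N.
  by rewrite big_distrl /=; apply: eq_bigr => j _; rewrite ab abszM.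
have bj0 : b j0 != 0 by apply: contraNneq nz; rewrite ab => ->; rewrite mul0r.
have sb0 : (0 < \sum_(j < k) `|b j|)%N.
  by rewrite (bigD1 j0) //= ltn_addr // absz_gt0.
have le2 : ((\sum_(j < k) `|b j|) * 2 <= (\sum_(j < k) `|b j|) * g)%N by rewrite leq_mul2l g1 orbT.
apply: (IH b); first by lia.
  by exists j0.
have : (g%:R : algC) * \sum_(j < k) (b j)%:~R * e j = 0.
  rewrite mulr_sumr -[RHS]rel; apply: eq_bigr => j _.
  by rewrite [in RHS]ab intrM mulrA [g%:R * _]mulrC.
move/eqP; rewrite mulf_eq0 pnatr_eq0 => /orP[/eqP g0|/eqP //].
by move: g1; rewrite g0.
Qed.

Lemma places_finite M K v : is_number_field M -> is_number_field K ->
  is_nonarch_place K v -> finite_set (places_above M K v).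
Proof.
move=> hM hK hv; have hM' := hM; case: hM' => _ _ _ _ [s [_ hs]].
apply: contrapT => inf.
have [B BA sz] := infinite_set_fset (size s).+1 inf.
pose k := (size s).+1.
pose W (j : 'I_k) := nth set0 (finmap.enum_fset B) j.
have hW : forall j, places_above M K v (W j).
  move=> j; apply: BA; rewrite /W /=; apply: mem_nth.
  by apply: leq_trans sz; apply: ltn_ord.
have injW : forall j l, W j = W l -> j = l.
  move=> j l e; apply/val_inj/eqP; move: e; rewrite /W => /eqP.
  rewrite nth_uniq ?finmap.fset_uniq //; by apply: leq_trans sz; apply: ltn_ord.
have sep : forall p : 'I_k * 'I_k, exists x, p.1 != p.2 -> W p.1 x /\ ~ W p.2 x.
  case=> l j /=; case: (eqVneq l j) => [->|ne]; first by exists 0.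
  suff [x [h1 h2]] : exists x, W l x /\ ~ W j x by exists x.
  apply: contrapT => hn.
  have sub : W l `<=` W j.
    by move=> x Wx; apply: contrapT => nx; apply: hn; exists x.
  have sub' := incomp hM hK (hW j) (hW l) sub.
  by move/negP: ne; apply; apply/eqP/injW; apply/seteqP; split.
have [X hX] := choice sep.
have hWp : forall j, is_nonarch_place M (W j) by move=> j; case: (hW j).
pose e (j : 'I_k) := \prod_(l < k | l != j) X (l, j).
have Oe : forall j, ring_of_integers M (e j).
  move=> j; apply: O_prod => // l lj; have [h _] := hX (l, j) lj.
  by apply: (pl_O (hWp l)); move: h => /=.
have e_in : forall l j, l != j -> W l (e j).
  move=> l j lj; rewrite /e (bigD1 l) //=.
  have [h _] := hX (l, j) lj.
  apply: (plMr (hWp l)) => //; apply: O_prod => // m /andP[mj _].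
  by have [h2 _] := hX (m, j) mj; apply: (pl_O (hWp m)); move: h2 => /=.
have e_out : forall j, ~ W j (e j).
  move=> j; suff [] : ring_of_integers M (e j) /\ ~ W j (e j) by [].
  rewrite /e; apply: (big_ind (fun y => ring_of_integers M y /\ ~ W j y)).
  - by split; [apply: O1 | apply: pl1 (hWp j)].
  - move=> x y [Ox nx] [Oy ny]; split; first exact: OM.
    by case/(pl_prime (hWp j) Ox Oy).
  - move=> l lj; have [h1 h2] := hX (l, j) lj; split => //.
    by apply: (pl_O (hWp l)); move: h1 => /=.
have span : forall j, exists a : 'I_(size s) -> rat, e j = \sum_(i < size s) ratr (a i) * s`_i.
  by move=> j; apply: hs; case: (Oe j).
have [a [[j nv] rel]] := descent hK hv (lin_dep (ltnSn _) span).
have Oa : ring_of_integers M (a j)%:~R by apply: O_int.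
have wae : W j ((a j)%:~R * e j).
  have -> : (a j)%:~R * e j = - \sum_(l < k | l != j) (a l)%:~R * e l.
    by apply/eqP; rewrite -addr_eq0; move: rel; rewrite (bigD1 j) //= => ->.
  apply: (plN (hWp j)); apply: (pl_sum (hWp j)) => l lj.
  by apply: (plM (hWp j)); [apply: O_int | apply: e_in; rewrite eq_sym].
case: (pl_prime (hWp j) Oa (Oe j) wae) => [wa|]; last by apply: e_out.
apply: nv; have [_ ew] := hW j; rewrite -ew; split => //; exact: nf_int.
Qed.

Lemma O_sub L M x : L `<=` M -> ring_of_integers L x -> ring_of_integers M x.
Proof. by move=> LM [Lx Ax]; split => //; apply: LM. Qed.

Lemma setI_sub (u L K : set algC) : K `<=` L -> u `&` L `&` K = u `&` K.
Proof. by move=> KL; apply/seteqP; split => x /=; [case=> -[]|case=> ux Kx; split=> //; split=> //; apply: KL]. Qed.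

Lemma restr_place M L K v u : is_number_field L -> K `<=` L -> L `<=` M ->
  is_nonarch_place K v -> places_above M K v u -> places_above L K v (u `&` L).
Proof.
move=> hL KL LM hv [hu eu]; split; last by rewrite setI_sub.
have vu : v `<=` u by rewrite -eu => x [].
have vK : v `<=` K by rewrite -eu => x [].
split.
- split; last by split; [apply: pl0 hu | apply: nf0 hL].
  by move=> x [ux Lx]; split => //; case: (pl_O hu ux).
- split.
    by move=> x y [ux Lx] [uy Ly]; split; [apply: (plB hu) | apply: nfB].
  move=> a x Oa [ux Lx]; split; first by apply: (plM hu) => //; apply: O_sub Oa.
  by apply: nfM => //; case: Oa.
- by move=> [] /(pl1 hu).
- have [x [vx nx]] := pl_nz hv.
  by exists x; split => //; split; [apply: vu | apply: KL; apply: vK].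
- move=> a b Oa Ob [uab Lab].
  case: (pl_prime hu (O_sub LM Oa) (O_sub LM Ob) uab) => h; [left|right]; split => //.
  + by case: Oa.
  + by case: Ob.
Qed.

Lemma sum_tower M L K v (f : set algC -> rat) : is_number_field L -> K `<=` L -> L `<=` M ->
  is_nonarch_place K v -> finite_set (places_above M K v) ->
  \sum_(w \in places_above L K v) \sum_(u \in places_above M L w) f u
  = \sum_(u \in places_above M K v) f u.
Proof.
move=> hL KL LM hv finA.
set A := places_above M K v.
pose h (u : set algC) := u `&` L.
rewrite (eq_fsbigr (fun w => \sum_(u \in A) (if u \in [set u | h u = w] then f u else 0))); last first.
  move=> w; rewrite inE => -[hw ew].
  rewrite -fsbig_mkcondr; apply: eq_fsbigl; apply/seteqP; split => u /=.
    by move=> [hu eu]; split => //; split => //; rewrite -ew -eu /h setI_sub.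
  by move=> [[hu euK] e].
rewrite -(fsbig_widen (h @` A)); first last.
- move=> w [_ nw]; rewrite /= fsbig1 // => u Au; case: ifPn => //; rewrite inE /= => e.
  by exfalso; apply: nw; exists u.
- by move=> _ [u Au <-]; exact: (restr_place hL KL LM hv Au).
rewrite exchange_fsbig //; last exact: finite_image.
apply: eq_fsbigr => u; rewrite inE => Au.
rewrite -(fsbig_widen [set h u]); first last.
- move=> w [_ /= nw]; case: ifPn => //; rewrite inE /= => e.
  by exfalso; apply: nw.
- by move=> w /= ->; exists u.
by rewrite fsbig_set1 ifT // inE.
Qed.

Lemma Kf_mono (Kf : nat -> set algC) : (forall i, Kf i `<=` Kf i.+1) ->
  forall i j, (i <= j)%N -> Kf i `<=` Kf j.
Proof.
move=> hinc i j /subnK <-; elim: (j - i)%N => [|n IH]; first by rewrite add0n.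
by rewrite addSn => x /IH /hinc.
Qed.

Lemma nf_in_Kf (Kf : nat -> set algC) : (forall i, is_number_field (Kf i)) ->
  (forall i, Kf i `<=` Kf i.+1) -> (forall x : algC, exists i, Kf i x) ->
  forall K, is_number_field K -> exists i, K `<=` Kf i.
Proof.
move=> hK hinc hcov K hKK; case: hKK => _ _ _ _ [s [_ hs]].
have : forall m, exists i, forall j : 'I_(size s), (j < m)%N -> Kf i s`_j.
  elim=> [|m [i IH]]; first by exists 0%N.
  have [i' hi'] := hcov s`_m.
  exists (maxn i i') => j; rewrite ltnS leq_eqVlt => /orP[/eqP ->|jm].
    by apply: Kf_mono hi'; rewrite // leq_maxr.
  by apply: (Kf_mono hinc (leq_maxl i i')); apply: IH.
move/(_ (size s)) => [i hi]; exists i; move=> x Kx; have [a ->] := hs x Kx.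
apply: (nf_sum (hK i)) => j _; apply: (nfM (hK i)); first exact: (nf_rat (hK i)).
exact: hi.
Qed.

Lemma self_places K v : is_nonarch_place K v -> places_above K K v = [set v].
Proof.
move=> hv; apply/seteqP; split => w /=.
  move=> [hw <-]; apply/seteqP; split => x; last by case.
  by move=> wx; split => //; apply: pl_sub hw _ wx.
move=> ->; split => //; apply/seteqP; split => x; first by case.
by move=> vx; split => //; apply: pl_sub hv _ vx.
Qed.

Lemma chain (Kf : nat -> set algC) (d : nat -> set algC -> rat) :
  (forall i, is_number_field (Kf i)) -> (forall i, Kf i `<=` Kf i.+1) ->
  (forall i v, is_nonarch_place (Kf i) v ->
          d i v = \sum_(w \in places_above (Kf i.+1) (Kf i) v) d i.+1 w) ->
  forall K v i j, is_number_field K -> K `<=` Kf i -> is_nonarch_place K v -> (i <= j)%N ->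
  \sum_(u \in places_above (Kf i) K v) d i u = \sum_(u \in places_above (Kf j) K v) d j u.
Proof.
move=> hK hinc hd K v i j hKK Ki hv; elim: j => [|j IH].
  by rewrite leqn0 => /eqP ->.
rewrite leq_eqVlt => /orP[/eqP -> //|]; rewrite ltnS => ij; rewrite (IH ij).
have Kj : K `<=` Kf j by move=> x /Ki; apply: Kf_mono.
rewrite -(sum_tower _ (hK j) Kj (hinc j) hv); last exact: places_finite.
apply: eq_fsbigr => u; rewrite inE => -[hu _]; exact: hd.
Qed.

Unset Implicit Arguments.
Set Strict Implicit.

Theorem lemma4p2 (Kf : nat -> set algC) (d : nat -> set algC -> rat)
  (hK : forall i, is_number_field (Kf i))
  (hinc : forall i, Kf i `<=` Kf i.+1)
  (hcov : forall x : algC, exists i, Kf i x)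
  (hd : forall i v, is_nonarch_place (Kf i) v ->
          d i v = \sum_(w \in places_above (Kf i.+1) (Kf i) v) d i.+1 w) :
  exists c : set algC -> set algC -> rat,
    (consistent c /\
     forall i v, is_nonarch_place (Kf i) v -> c (Kf i) v = d i v) /\
    forall c' : set algC -> set algC -> rat,
      consistent c' ->
      (forall i v, is_nonarch_place (Kf i) v -> c' (Kf i) v = d i v) ->
      forall K v, in_J K v -> c' K v = c K v.
Proof.
pose idx := fun K : set algC => match pselect (exists i, K `<=` Kf i) with
  | left h => projT1 (cid h) | right _ => 0%N end.
have idxP : forall K, (exists i, K `<=` Kf i) -> K `<=` Kf (idx K).
  move=> K h; rewrite /idx; case: pselect => [h'|//]; exact: (projT2 (cid h')).
have idxN : forall K, is_number_field K -> K `<=` Kf (idx K).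
  by move=> K hKK; apply: idxP; apply: nf_in_Kf.
have chain2 : forall K v i j, is_number_field K -> K `<=` Kf i -> K `<=` Kf j ->
    is_nonarch_place K v ->
    \sum_(u \in places_above (Kf i) K v) d i u = \sum_(u \in places_above (Kf j) K v) d j u.
  move=> K v i j hKK Ki Kj hv; case: (leqP i j) => [ij|/ltnW ji]; first exact: chain.
  by apply/esym; apply: chain.
pose c := fun K v => \sum_(u \in places_above (Kf (idx K)) K v) d (idx K) u.
exists c; split; [split|].
- move=> K L v hKK hL KL hv.
  have Lj := idxN L hL.
  rewrite /c (chain2 K v (idx K) (idx L)) //; first last.
  + by move=> x /KL /Lj.
  + exact: idxN.
  by rewrite -(sum_tower _ hL KL Lj hv) //; apply: places_finite.
- move=> i v hv; rewrite /c.
  rewrite -(chain2 (Kf i) v i (idx (Kf i))) //; last exact: idxN.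
  by rewrite self_places // fsbig_set1.
- move=> c' hc' hc'd K v [hKK hv].
  rewrite (hc' K (Kf (idx K)) v hKK (hK _) (idxN K hKK) hv) /c.
  apply: eq_fsbigr => w; rewrite inE => -[hw _]; exact: hc'd.
Qed.
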